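(* In the risk-aversion-shock setting, suppose $\mathbb P_{(z,\hat z)}(\hat\beta\hat R>0)>0$ for all $z,\hat z\in\mathsf Z$. If there exists $z_{ij}\in\mathsf Z$ such that $\lim_{w\to\infty}c^*(w,z_{ij})/w>0$, then $\bar p_{i1}=\cdots=\bar p_{i,i-1}=0$. In particular, if for every $i>1$ there exists $j$ with $\lim_{w\to\infty}c^*(w,z_{ij})/w>0$, then $\bar P$ is upper triangular.
   Context: Risk-aversion-shock setting. $\mathsf Z=\bar{\mathsf Z}\times\tilde{\mathsf Z}$ with $\bar{\mathsf Z}=\{\bar z_1,\dots,\bar z_N\}$, $\tilde{\mathsf Z}=\{\tilde z_1,\dots,\tilde z_M\}$; $Z_t=(\bar Z_t,\tilde Z_t)$ where $\{\bar Z_t\}$, $\{\tilde Z_t\}$ are independent Markov chains with transition matrices $\bar P=(\bar p_{ij})$ and $\tilde P=(\tilde p_{jk})$, so $\{Z_t\}$ has transition matrix $P=\bar P\otimes\tilde P$. Write $z_{ij}=(\bar z_i,\tilde z_j)$. $\{\epsilon_t\}_{t\ge1}$ i.i.d. with distribution $\pi$, independent of $\{Z_t\}$; for nonnegative measurable $\beta,R,Y$, $\beta_t=\beta(Z_{t-1},Z_t,\epsilon_t)$, $R_t=R(Z_{t-1},Z_t,\epsilon_t)$, $Y_t=Y(Z_{t-1},Z_t,\epsilon_t)$, $\beta_0=1$. Utility: $u(c,z_{ij})=c^{1-\gamma_i}/(1-\gamma_i)$ if $\gamma_i\ne1$ and $\log c$ if $\gamma_i=1$, where $0<\gamma_1<\dots<\gamma_N$;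 $u'(c,z)$ is the derivative in $c$. $\mathbb E_z$: expectation given $Z_0=z$; under $\mathbb E_z$, $\hat Z=Z_1$, $\hat\beta=\beta(z,\hat Z,\epsilon_1)$, $\hat R=R(z,\hat Z,\epsilon_1)$, $\hat Y=Y(z,\hat Z,\epsilon_1)$. $\mathbb P_{(z,\hat z)}(\hat\beta\hat R>0):=\pi\{\epsilon:\beta(z,\hat z,\epsilon)R(z,\hat z,\epsilon)>0\}$. Assumption 2 holds: (a) $\mathbb E_zu'(\hat Y,\hat Z)<\infty$ and $\mathbb E_z\hat\beta\hat Ru'(\hat Y,\hat Z)<\infty$ for all $z$; (b) $r(K(1))<1$ ($r$ = spectral radius), $K_{z\hat z}(\theta)=P(z,\hat z)\int\beta(z,\hat z,\epsilon)R(z,\hat z,\epsilon)^\theta\pi(d\epsilon)$. $S_0=(0,\infty)\times\mathsf Z$; $\mathcal C$: continuous $c:S_0\to\mathbb R_+$, increasing in $w$, $0<c(w,z)\le w$, $\sup_{S_0}|u'(c(w,z),z)-u'(w,z)|<\infty$. $T$: $Tc(w,z)$ is the unique $\xi\in(0,w]$ with $u'(\xi,z)=\max\{\mathbb E_z\hat\beta\hat Ru'(c(\hat R(w-\xi)+\hat Y,\hat Z),\hat Z),u'(w,z)\}$. $c^*$ is the unique fixed point of $T$ in $\mathcal C$ (optimal consumption function). *)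

(* Defs.v *)
From HB Require Import structures.
From mathcomp Require Import all_boot all_order all_algebra.
From mathcomp Require Import all_classical all_reals all_analysis.
From mathcomp Require Import complex.

Set Implicit Arguments.
Unset Strict Implicit.
Unset Printing Implicit Defensive.

Import Order.TTheory GRing.Theory Num.Theory.
Import numFieldNormedType.Exports.
Local Open Scope classical_set_scope.
Local Open Scope ring_scope.

(* The state space Z = Zbar x Ztilde, with Zbar = {zbar_0,...,zbar_(N-1)}
   and Ztilde = {ztilde_0,...,ztilde_(M-1)}; z_ij = (i, j). *)
Definition Zsp (N M : nat) : finType := ('I_N * 'I_M)%type.

Definition stochastic (R : realType) (n : nat) (Q : 'I_n -> 'I_n -> R) : Prop :=
  (forall i j, 0 <= Q i j) /\ (forall i, \sum_(j < n) Q i j = 1).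

Definition Ptens (R : realType) (N M : nat)
  (Pb : 'I_N -> 'I_N -> R) (Pt : 'I_M -> 'I_M -> R) (z zh : Zsp N M) : R :=
  Pb z.1 zh.1 * Pt z.2 zh.2.

(* Marginal utility u'(c, z_ij) = c^(-gamma_i) for c > 0 (this covers the
   log case gamma_i = 1); u'(c, z) = +oo for c <= 0 (u'(0,z) = +oo). *)
Definition uprime (R : realType) (N M : nat) (gam : 'I_N -> R)
  (c : R) (z : Zsp N M) : \bar R :=
  if 0 < c then ((c `^ (- gam z.1))%:E)%E else (+oo)%E.

Definition Ez (R : realType) (N M : nat) (d : measure_display)
  (E : measurableType d) (P : Zsp N M -> Zsp N M -> R)
  (pi : probability E R) (z : Zsp N M) (f : Zsp N M -> E -> \bar R) : \bar R :=
  (\sum_(zh : Zsp N M) (P z zh)%:E * \int[pi]_e f zh e)%E.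

Definition spec_rad_lt1 (R : realType) (n : nat) (A : 'M[R]_n) : Prop :=
  forall lam : R[i], root (char_poly (map_mx (fun x : R => (x%:C)%C) A)) lam ->
    `|lam| < 1.

Definition K1 (R : realType) (N M : nat) (d : measure_display)
  (E : measurableType d) (P : Zsp N M -> Zsp N M -> R) (pi : probability E R)
  (beta Rf : Zsp N M -> Zsp N M -> E -> R) : 'M[R]_#|Zsp N M| :=
  \matrix_(a < #|Zsp N M|, b < #|Zsp N M|)
    (P (enum_val a) (enum_val b) *
     fine (\int[pi]_e (beta (enum_val a) (enum_val b) e
                       * Rf (enum_val a) (enum_val b) e)%:E)).

Definition assumption2 (R : realType) (N M : nat) (d : measure_display)
  (E : measurableType d) (gam : 'I_N -> R) (P : Zsp N M -> Zsp N M -> R)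
  (pi : probability E R) (beta Rf Y : Zsp N M -> Zsp N M -> E -> R) : Prop :=
  (forall z, (Ez P pi z (fun zh e => uprime gam (Y z zh e) zh) < +oo)%E) /\
  (forall z, (Ez P pi z (fun zh e =>
       (beta z zh e * Rf z zh e)%:E * uprime gam (Y z zh e) zh) < +oo)%E) /\
  (forall z zh, 0 < P z zh ->
       (\int[pi]_e (beta z zh e * Rf z zh e)%:E < +oo)%E) /\
  spec_rad_lt1 (K1 P pi beta Rf).

(* The candidate class C of consumption functions c : S_0 -> R_+
   (values of c at w <= 0 are irrelevant). *)
Definition in_C (R : realType) (N M : nat) (gam : 'I_N -> R)
  (c : R -> Zsp N M -> R) : Prop :=
  (forall z, {within [set w : R | 0 < w], continuous (fun w => c w z)}) /\
  (forall z w w', 0 < w -> w <= w' -> c w z <= c w' z) /\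
  (forall w z, 0 < w -> 0 < c w z /\ c w z <= w) /\
  (exists K : R, forall w z, 0 < w ->
       `| c w z `^ (- gam z.1) - w `^ (- gam z.1) | <= K).

(* A next-period wealth of 0 gives consumption 0 (limit of 0 < c(w) <= w),
   hence u' = +oo; conventions 0 * +oo = 0 as usual. *)
Definition T_rhs (R : realType) (N M : nat) (d : measure_display)
  (E : measurableType d) (gam : 'I_N -> R) (P : Zsp N M -> Zsp N M -> R)
  (pi : probability E R) (beta Rf Y : Zsp N M -> Zsp N M -> E -> R)
  (c : R -> Zsp N M -> R) (w xi : R) (z : Zsp N M) : \bar R :=
  Order.max
    (Ez P pi z (fun zh e =>
       let a := Rf z zh e * (w - xi) + Y z zh e in
       let ca := (if (0 < a)%R then c a zh else 0%R) in
       ((beta z zh e * Rf z zh e)%:E * uprime gam ca zh)%E))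
    (uprime gam w z).

Definition is_Tc (R : realType) (N M : nat) (d : measure_display)
  (E : measurableType d) (gam : 'I_N -> R) (P : Zsp N M -> Zsp N M -> R)
  (pi : probability E R) (beta Rf Y : Zsp N M -> Zsp N M -> E -> R)
  (c : R -> Zsp N M -> R) (w : R) (z : Zsp N M) (xi : R) : Prop :=
  0 < xi /\ xi <= w /\ uprime gam xi z = T_rhs gam P pi beta Rf Y c w xi z.

Definition fixed_point_T (R : realType) (N M : nat) (d : measure_display)
  (E : measurableType d) (gam : 'I_N -> R) (P : Zsp N M -> Zsp N M -> R)
  (pi : probability E R) (beta Rf Y : Zsp N M -> Zsp N M -> E -> R)
  (c : R -> Zsp N M -> R) : Prop :=
  forall w z, 0 < w -> is_Tc gam P pi beta Rf Y c w z (c w z).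

Definition pos_asym_mpc (R : realType) (N M : nat)
  (c : R -> Zsp N M -> R) (z : Zsp N M) : Prop :=
  exists l : R, 0 < l /\ (fun w => c w z / w) x @[x --> +oo] --> l.

(* Main.v *)
Require Import Defs.
From HB Require Import structures.
From mathcomp Require Import all_boot all_order all_algebra.
From mathcomp Require Import all_classical all_reals all_analysis.
From mathcomp Require Import complex.
Import Order.TTheory GRing.Theory Num.Theory.
Import numFieldNormedType.Exports.
Local Open Scope classical_set_scope.
Local Open Scope ring_scope.
From mathcomp Require Import ring lra.
Import HBNNSimple.

Lemma int_lb d (T : measurableType d) (R : realType) (mu : {measure set T -> \bar R})
  (A : set T) (mA : measurable A) (k : R) (k0 : 0 <= k) (f : T -> \bar R) :
  (forall x, (0 <= f x)%E) -> (forall x, ((k * \1_A x)%:E <= f x)%E) ->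
  (k%:E * mu A <= \int[mu]_x f x)%E.
Proof.
move=> f0 fk.
have -> : (k%:E * mu A = \int[mu]_x (k * \1_A x)%:E)%E.
  rewrite (@integralZl_indic _ _ _ _ _ measurableT (fun _ => A)) //; last first.
    by move=> /lt_le_trans /(_ k0); rewrite ltxx.
  by rewrite integral_indic // setIT.
pose h := scale_nnsfun (indic_nnsfun R mA) k0.
have -> : (\int[mu]_x (k * \1_A x)%:E = \int[mu]_x (h x)%:E)%E by [].
rewrite (integral_nnsfun _ measurableT) ge0_integralE; last by move=> *; exact: f0.
apply: ereal_sup_ubound => /=.
exists h.
  by move=> x; rewrite /patch in_setT; exact: fk.
by apply: eq_sintegral => x; rewrite /patch in_setT.
Qed.

Definition Aset {d} {T : measurableType d} {R : realType} (F G H : T -> R) (n : nat) : set T :=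
  [set e | n.+1%:R^-1 <= F e] `&` [set e | G e <= n.+1%:R] `&` [set e | H e <= n.+1%:R].

Lemma mset_ge d (T : measurableType d) (R : realType) (F : T -> R) a :
  measurable_fun setT F -> measurable [set e | a <= F e].
Proof. by move=> mF; rewrite -preimage_itvcy -(setTI (_ @^-1` _)); exact: mF. Qed.

Lemma mset_le d (T : measurableType d) (R : realType) (F : T -> R) a :
  measurable_fun setT F -> measurable [set e | F e <= a].
Proof. by move=> mF; rewrite -preimage_itvNyc -(setTI (_ @^-1` _)); exact: mF. Qed.

Lemma mset_gt d (T : measurableType d) (R : realType) (F : T -> R) a :
  measurable_fun setT F -> measurable [set e | a < F e].
Proof. by move=> mF; rewrite -preimage_itvoy -(setTI (_ @^-1` _)); exact: mF. Qed.

Lemma mAset d (T : measurableType d) (R : realType) (F G H : T -> R) n :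
  measurable_fun setT F -> measurable_fun setT G -> measurable_fun setT H ->
  measurable (Aset F G H n).
Proof.
move=> mF mG mH; apply: measurableI; first apply: measurableI.
- exact: mset_ge.
- exact: mset_le.
- exact: mset_le.
Qed.

Lemma pos_set d (T : measurableType d) (R : realType) (mu : {measure set T -> \bar R})
  (F G H : T -> R) :
  measurable_fun setT F -> measurable_fun setT G -> measurable_fun setT H ->
  (0 < mu [set e | (0 < F e)%R])%E ->
  exists n : nat, (0 < mu (Aset F G H n))%E.
Proof.
move=> mF mG mH mpos.
have [//|hn] := pselect (exists n : nat, (0 < mu (Aset F G H n))%E).
have h0 n : mu (Aset F G H n) = 0%E.
  apply/eqP; rewrite eq_le measure_ge0 andbT leNgt; apply/negP => h.
  by apply: hn; exists n.
have : (mu [set e | (0 < F e)%R] <= \sum_(0 <= n <oo) mu (Aset F G H n))%E.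
  apply: measure_sigma_subadditive.
  - by move=> n; exact: mAset.
  - exact: mset_gt.
  move=> e /= Fe.
  pose x := Num.max (F e)^-1 (Num.max (G e) (H e)).
  have x0 : 0 <= x by rewrite le_max ltW // invr_gt0.
  have hx : x < (Num.truncn x).+1%:R by rewrite -truncn_lt_nat.
  exists (Num.truncn x) => //.
  have := hx; rewrite gt_max => /andP[h1]; rewrite gt_max => /andP[h2 h3].
  split; [split|]; rewrite /= ?ltW //.
  by rewrite -[F e]invrK ltf_pV2 ?posrE ?invr_gt0 // ltr0Sn.
set S := (X in (_ <= X)%E -> _).
have -> : S = 0%E by rewrite /S eseries0 // => i _ _; exact: h0.
by rewrite leNgt mpos.
Qed.

Lemma growth {R : realType} (K c1 c2 a b Mb : R) : 0 < K -> 0 < c1 -> 0 < c2 ->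
  0 < a -> a < b ->
  ~ (forall w, 1 <= w -> Mb < w -> K * (c2 * w) `^ (- a) <= (c1 * w) `^ (- b)).
Proof.
move=> K0 c10 c20 a0 ab H.
pose dl := b - a.
have d0 : 0 < dl by rewrite /dl subr_gt0.
pose u := c1 `^ (- b); pose v := c2 `^ (- a).
have u0 : 0 < u by rewrite powR_gt0.
have v0 : 0 < v by rewrite powR_gt0.
pose B := u / (K * v).
have B0 : 0 < B by rewrite divr_gt0 // mulr_gt0.
have hB : B * (K * v) = u by rewrite /B divfK // gt_eqF // mulr_gt0.
pose w := Num.max (Mb + 1) (Num.max 1 ((B + 1) `^ dl^-1)).
have w1 : 1 <= w by rewrite /w !le_max lexx orbT.
have Mw : Mb < w by rewrite /w lt_max ltrDl ltr01.
have w0 : 0 < w by apply: lt_le_trans w1.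
have wB : B + 1 <= w `^ dl.
  have h : (B + 1) `^ dl^-1 <= w by rewrite /w !le_max lexx !orbT.
  have := @ge0_ler_powR R dl (ltW d0) _ _ _ _ h.
  rewrite -powRrM mulVf ?gt_eqF // powRr1; last by rewrite addr_ge0 // ltW.
  apply; rewrite nnegrE ?powR_ge0 //; exact: ltW.
have := H w w1 Mw.
rewrite (powRM _ (ltW c20) (ltW w0)) (powRM _ (ltW c10) (ltW w0)) -/u -/v.
have -> : w `^ (- b) = w `^ (- a) * w `^ (- dl).
  rewrite -powRD; last by apply/implyP => _; rewrite gt_eqF.
  by congr (_ `^ _); rewrite /dl; lra.
pose X := w `^ (- a); pose Y := w `^ (- dl).
have X0 : 0 < X by rewrite powR_gt0.
have Y0 : 0 <= Y by rewrite powR_ge0.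
have hY : Y * (B + 1) <= 1.
  rewrite /Y powRN -ler_pdivlMl ?invr_gt0 ?powR_gt0 // invrK mulr1 //.
rewrite -/X -/Y => hineq.
have h1 : K * (v * X) * (B + 1) <= u * (X * Y) * (B + 1).
  by rewrite ler_pM2r // ltr_wpDl // ltW.
have h2 : u * (X * Y) * (B + 1) <= u * X.
  by rewrite -mulrA -mulrA ler_pM2l // -[X in _ <= X]mulr1 ler_pM2l // mulrC.
have h3 : K * (v * X) * (B + 1) = u * X + K * (v * X).
  by rewrite -hB; ring.
have h4 : 0 < K * (v * X) by rewrite !mulr_gt0.
lra.
Qed.

Lemma powRN_anti {R : realType} {x y g : R} : 0 < x -> x <= y -> 0 < g ->
  y `^ (- g) <= x `^ (- g).
Proof.
move=> x0 xy g0; have y0 : 0 < y by exact: lt_le_trans xy.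
rewrite !powRN lef_pV2 ?posrE ?powR_gt0 //.
by apply: (@ge0_ler_powR R g (ltW g0) x y) => //; rewrite nnegrE ltW.
Qed.

Theorem proposition3p1 (R : realType) (N M : nat) (d : measure_display)
  (E : measurableType d) (pi : probability E R)
  (Pb : 'I_N -> 'I_N -> R) (Pt : 'I_M -> 'I_M -> R) (gam : 'I_N -> R)
  (beta Rf Y : Zsp N M -> Zsp N M -> E -> R) (cstar : R -> Zsp N M -> R) :
  stochastic Pb -> stochastic Pt ->
  (forall i, 0 < gam i) -> (forall i k : 'I_N, (i < k)%N -> gam i < gam k) ->
  (forall z zh, measurable_fun setT (beta z zh) /\ measurable_fun setT (Rf z zh)
                /\ measurable_fun setT (Y z zh)) ->
  (forall z zh e, 0 <= beta z zh e /\ 0 <= Rf z zh e /\ 0 <= Y z zh e) ->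
  assumption2 gam (Ptens Pb Pt) pi beta Rf Y ->
  in_C gam cstar -> fixed_point_T gam (Ptens Pb Pt) pi beta Rf Y cstar ->
  (forall z zh, (0 < pi [set e | (0 < beta z zh e * Rf z zh e)%R])%E) ->
  (forall (i : 'I_N) (j : 'I_M), pos_asym_mpc cstar (i, j) ->
     forall k : 'I_N, (k < i)%N -> Pb i k = 0) /\
  ((forall i : 'I_N, (0 < i)%N -> exists j : 'I_M, pos_asym_mpc cstar (i, j)) ->
     forall i k : 'I_N, (k < i)%N -> Pb i k = 0).
Proof.
move=> sPb sPt gam0 gammono meas nonneg _ inC fixT posP.
have part1 : forall (i : 'I_N) (j : 'I_M), pos_asym_mpc cstar (i, j) ->
    forall k : 'I_N, (k < i)%N -> Pb i k = 0.
  move=> i j [l [l0 hl]] k ki.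
  apply/eqP; rewrite eq_le (proj1 sPb i k) andbT leNgt; apply/negP => pik.
  have [j' pjj'] : exists j', 0 < Pt j j'.
    apply: contrapT => hno.
    have : \sum_(j' < M) Pt j j' = 0.
      apply: big1 => j' _.
      apply/eqP; rewrite eq_le (proj1 sPt j j') andbT leNgt; apply/negP => h.
      by apply: hno; exists j'.
    by rewrite (proj2 sPt j) => /eqP; rewrite oner_eq0.
  pose z : Zsp N M := (i, j); pose zh : Zsp N M := (k, j').
  pose p := Pb i k * Pt j j'.
  have p0 : 0 < p by rewrite mulr_gt0.
  have [mb [mR mY]] := meas z zh.
  have mF : measurable_fun setT (fun e => beta z zh e * Rf z zh e).
    exact: measurable_realfun.measurable_funM.
  have [n hA] := @pos_set _ _ _ pi _ _ _ mF mR mY (posP z zh).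
  set A := Aset _ _ _ n in hA.
  have mA : measurable A by exact: mAset.
  have finA : pi A \is a fin_num by exact: fin_num_measure.
  set q := fine (pi A).
  have qE : pi A = q%:E by rewrite fineK.
  have q0 : 0 < q by rewrite -lte_fin -qE.
  have hl2 : l / 2 < l by lra.
  have [Mb [_ HM]] := cvgr_gt _ hl _ hl2.
  have key w : 1 <= w -> Mb < w ->
      p * (n.+1%:R^-1 * (2 * n.+1%:R * w) `^ (- gam k) * q) <= (l / 2 * w) `^ (- gam i).
    move=> w1 Mw.
    have w0 : 0 < w by lra.
    have [xi0 xiw] := proj1 (proj2 (proj2 inC)) w z w0.
    set xi := cstar w z in xi0 xiw.
    have lxi : l / 2 * w < xi.
      by have := HM w Mw; rewrite ltr_pdivlMr.
    have lw0 : 0 < l / 2 * w by rewrite mulr_gt0 // divr_gt0.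
    apply: le_trans; last exact: (powRN_anti lw0 (ltW lxi) (gam0 i)).
    rewrite -lee_fin.
    have [_ [_ Heq]] := fixT w z w0.
    have -> : ((xi `^ (- gam i))%:E = uprime gam xi z)%E by rewrite /uprime xi0.
    rewrite Heq /T_rhs le_max; apply/orP; left.
    rewrite /Ez (bigD1 zh) //=.
    apply: le_trans (leeDl _ _); last first.
      apply: sume_ge0 => zz _; apply: mule_ge0.
        by rewrite lee_fin /Ptens mulr_ge0 ?(proj1 sPb) ?(proj1 sPt).
      apply: integral_ge0 => e _; apply: mule_ge0.
        by rewrite lee_fin mulr_ge0 //; have := nonneg z zz e; tauto.
      by rewrite /uprime; case: ifP => _ //; rewrite lee_fin powR_ge0.
    rewrite EFinM; apply: lee_wpmul2l; first by rewrite lee_fin ltW.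
    have C0 : 0 <= n.+1%:R^-1 * (2 * n.+1%:R * w) `^ (- gam k).
      by rewrite mulr_ge0 ?powR_ge0 // invr_ge0.
    rewrite EFinM -qE; apply: (@int_lb _ _ _ pi A mA _ C0).
      move=> e; apply: mule_ge0.
        by rewrite lee_fin mulr_ge0 //; have := nonneg z zh e; tauto.
      by rewrite /uprime; case: ifP => _ //; rewrite lee_fin powR_ge0.
    move=> e; rewrite indicE; case: (boolP (e \in A)) => [/set_mem Ae|_]; last first.
      rewrite mulr0; apply: mule_ge0.
        by rewrite lee_fin mulr_ge0 //; have := nonneg z zh e; tauto.
      by rewrite /uprime; case: ifP => _ //; rewrite lee_fin powR_ge0.
    have [[AF AR] AY] := Ae.
    rewrite /= in AF AR AY.
    have [b0 [R0 Y0]] := nonneg z zh e.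
    rewrite mulr1 EFinM; apply: lee_pmul.
    - by rewrite lee_fin invr_ge0.
    - by rewrite lee_fin powR_ge0.
    - by rewrite lee_fin.
    set a := (Rf z zh e * (w - cstar w z) + Y z zh e).
    case: ifP => a0; last by rewrite /uprime ltxx leey.
    have [ca0 caa] := proj1 (proj2 (proj2 inC)) a zh a0.
    rewrite /uprime ca0 lee_fin /=.
    apply: powRN_anti => //.
    apply: (le_trans caa).
    have h1 : 0 <= w - cstar w z by rewrite subr_ge0.
    have h2 : w - cstar w z <= w by rewrite gerBl ltW.
    have h3 : Rf z zh e * (w - cstar w z) <= n.+1%:R * w.
      by apply: ler_pM.
    have h4 : (1 : R) <= n.+1%:R by rewrite ler1n.
    rewrite /a; nra.
  apply: (@growth R (p * n.+1%:R^-1 * q) (l / 2) (2 * n.+1%:R) (gam k) (gam i) Mb).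
  - by rewrite !mulr_gt0 // invr_gt0.
  - by rewrite divr_gt0.
  - by rewrite mulr_gt0.
  - exact: gam0.
  - exact: gammono.
  move=> w w1 Mw; have := key w w1 Mw.
  by congr (_ <= _); ring.
split => // H i k ki.
have [j Hj] := H i (leq_ltn_trans (leq0n k) ki).
exact: part1 Hj k ki.
Qed.
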